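(* In the setting of the context, suppose $\mathcal G_{el}$ is connected and for every $i\in\mathcal D$ the gains satisfy $k^C_{1,i}<1$, $k^C_{2,i}<R^C_{ti}$, $k^C_{3,i}>0$, $k^V_{1,i}<1$, $k^V_{2,i}<R^V_{ti}$, $0<k^V_{3,i}<\frac{1}{L^V_{ti}}(k^V_{1,i}-1)(k^V_{2,i}-R^V_{ti})$. Then the origin of the linear system $\dot{\mathbf x}=\mathbf F\mathbf x$, $\mathbf x\in\mathbb{R}^{5N}$, is asymptotically stable.
   Context: Let $N\ge1$, $\mathcal D=\{1,\dots,N\}$, $\mathcal G_{el}$ an undirected graph on $\mathcal D$ with neighbor sets $\mathcal N_i$; for each $i$ let $C_{ti},L^C_{ti},R^C_{ti},L^V_{ti},R^V_{ti},R_{Li}>0$ and for each edge $R_{ij}=R_{ji}>0$. Let $$F_i=\begin{bmatrix}0&\frac{1}{C_{ti}}&0&\frac{1}{C_{ti}}&0\\ \frac{k^C_{1,i}-1}{L^C_{ti}}&\frac{k^C_{2,i}-R^C_{ti}}{L^C_{ti}}&\frac{k^C_{3,i}}{L^C_{ti}}&0&0\\ 0&-1&0&0&0\\ \frac{k^V_{1,i}-1}{L^V_{ti}}&0&0&\frac{k^V_{2,i}-R^V_{ti}}{L^V_{ti}}&\frac{k^V_{3,i}}{L^V_{ti}}\\ -1&0&0&0&0\end{bmatrix},$$ $e_1=(1,0,0,0,0)^T$, and let $\mathbf F\in\mathbb{R}^{5N\times5N}$ have $(i,i)$ block $F_i-\Big(\frac{1}{R_{Li}C_{ti}}+\sum_{j\in\mathcal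 N_i}\frac{1}{R_{ij}C_{ti}}\Big)e_1e_1^T$ and $(i,j)$ block ($j\ne i$) equal to $\frac{1}{R_{ij}C_{ti}}e_1e_1^T$ if $j\in\mathcal N_i$, $0$ otherwise. (This is the closed-loop dynamics, with exogenous inputs set to zero, of a cluster of $N$ DC microgrids, each with state: bus voltage, current-controlled converter filter current, its error integrator, voltage-controlled converter filter current, its error integrator.) *)

(* Defs.v *)
From Stdlib Require Import Reals Lra Lia Relations.
Open Scope R_scope.

Fixpoint sumR (n : nat) (f : nat -> R) : R :=
  match n with
  | O => 0
  | S m => sumR m f + f m
  end.

(* Nodes are 0,...,N-1 (the paper's 1,...,N shifted by one).
   The graph is given by a boolean adjacency adj. *)
Definition is_undirected_graph (N : nat) (adj : nat -> nat -> bool) : Prop :=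
  (forall i j, adj i j = true -> (i < N)%nat /\ (j < N)%nat) /\
  (forall i j, adj i j = adj j i) /\
  (forall i, adj i i = false).

Definition edge_rel (N : nat) (adj : nat -> nat -> bool) : relation nat :=
  fun a b => (a < N)%nat /\ (b < N)%nat /\ adj a b = true.

Definition graph_connected (N : nat) (adj : nat -> nat -> bool) : Prop :=
  forall i j, (i < N)%nat -> (j < N)%nat -> clos_refl_trans nat (edge_rel N adj) i j.

Definition Floc (Ct LCt RCt LVt RVt kC1 kC2 kC3 kV1 kV2 kV3 : R) (a b : nat) : R :=
  match a, b with
  | 0%nat, 1%nat => 1 / Ct
  | 0%nat, 3%nat => 1 / Ct
  | 1%nat, 0%nat => (kC1 - 1) / LCt
  | 1%nat, 1%nat => (kC2 - RCt) / LCt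
  | 1%nat, 2%nat => kC3 / LCt
  | 2%nat, 1%nat => -1
  | 3%nat, 0%nat => (kV1 - 1) / LVt
  | 3%nat, 3%nat => (kV2 - RVt) / LVt
  | 3%nat, 4%nat => kV3 / LVt
  | 4%nat, 0%nat => -1
  | _, _ => 0
  end.

Definition Fmat (N : nat) (adj : nat -> nat -> bool) (Rl : nat -> nat -> R)
  (Ct LCt RCt LVt RVt RL kC1 kC2 kC3 kV1 kV2 kV3 : nat -> R) (k l : nat) : R :=
  let i := (k / 5)%nat in let a := (k mod 5)%nat in
  let j := (l / 5)%nat in let b := (l mod 5)%nat in
  if Nat.eqb i j then
    Floc (Ct i) (LCt i) (RCt i) (LVt i) (RVt i)
         (kC1 i) (kC2 i) (kC3 i) (kV1 i) (kV2 i) (kV3 i) a b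
    - (if andb (Nat.eqb a 0) (Nat.eqb b 0) then
         1 / (RL i * Ct i)
         + sumR N (fun m => if adj i m then 1 / (Rl i m * Ct i) else 0)
       else 0)
  else if andb (andb (Nat.eqb a 0) (Nat.eqb b 0)) (adj i j) then
    1 / (Rl i j * Ct i)
  else 0.

Definition vnorm (n : nat) (v : nat -> R) : R := sqrt (sumR n (fun k => v k ^ 2)).

Definition is_solution (n : nat) (A : nat -> nat -> R) (x : R -> nat -> R) : Prop :=
  forall t k, (k < n)%nat ->
    derivable_pt_lim (fun s => x s k) t (sumR n (fun l => A k l * x t l)).

Definition origin_asymptotically_stable (n : nat) (A : nat -> nat -> R) : Prop :=
  (forall eps, 0 < eps -> exists delta, 0 < delta /\
     forall x, is_solution n A x -> vnorm n (x 0) < delta ->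
       forall t, 0 <= t -> vnorm n (x t) < eps) /\
  (exists delta, 0 < delta /\
     forall x, is_solution n A x -> vnorm n (x 0) < delta ->
       forall eps, 0 < eps -> exists T, forall t, T <= t -> vnorm n (x t) < eps).

(* Main.v *)
Require Import Defs.
From Stdlib Require Import Reals Lra Lia Psatz List Relations IndefiniteDescription.
Import ListNotations.
Open Scope R_scope.


Lemma sumR_ext n f g : (forall k, (k < n)%nat -> f k = g k) -> sumR n f = sumR n g.
Proof. induction n; simpl; intros H; [reflexivity|]. rewrite IHn by (intros; apply H; lia). rewrite H by lia. reflexivity. Qed.

Lemma sumR_le n f g : (forall k, (k < n)%nat -> f k <= g k) -> sumR n f <= sumR n g.
Proof. induction n; simpl; intros H; [lra|]. assert (f n <= g n) by (apply H; lia). assert (sumR n f <= sumR n g) by (apply IHn; intros; apply H; lia). lra. Qed.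

Lemma sumR_plus n f g : sumR n (fun k => f k + g k) = sumR n f + sumR n g.
Proof. induction n; simpl; [lra|]. rewrite IHn; ring. Qed.

Lemma sumR_scal n c f : sumR n (fun k => c * f k) = c * sumR n f.
Proof. induction n; simpl; [ring|]. rewrite IHn; ring. Qed.

Lemma sumR_0 n : sumR n (fun _ => 0) = 0.
Proof. induction n; simpl; [ring|]. rewrite IHn; ring. Qed.

Lemma sumR_nonneg n f : (forall k, (k < n)%nat -> 0 <= f k) -> 0 <= sumR n f.
Proof. intros H. rewrite <- (sumR_0 n). apply sumR_le. auto. Qed.

Lemma sumR_swap n m (h : nat -> nat -> R) :
  sumR n (fun i => sumR m (fun j => h i j)) = sumR m (fun j => sumR n (fun i => h i j)).
Proof. induction n; simpl.
- rewrite sumR_0; reflexivity.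
- rewrite IHn. rewrite <- sumR_plus. reflexivity. Qed.

Lemma sumR_delta n i g : (i < n)%nat -> sumR n (fun j => if Nat.eqb i j then g j else 0) = g i.
Proof. induction n; intros Hi; [lia|]. simpl. destruct (Nat.eq_dec i n) as [->|Hne].
- rewrite Nat.eqb_refl. rewrite (sumR_ext _ _ (fun _ => 0)). rewrite sumR_0; ring.
  intros k Hk. destruct (Nat.eqb_spec n k); [lia|reflexivity].
- rewrite IHn by lia. destruct (Nat.eqb_spec i n); [lia|ring]. Qed.

Lemma sumR_block5 n f : sumR (5 * n) f =
  sumR n (fun j => f (5*j+0)%nat + f (5*j+1)%nat + f (5*j+2)%nat + f (5*j+3)%nat + f (5*j+4)%nat).
Proof. induction n.
- reflexivity.
- replace (5 * S n)%nat with (S (S (S (S (S (5*n)))))) by lia. cbn [sumR]. rewrite IHn. cbn [sumR].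
  replace (5*n+0)%nat with (5*n)%nat by lia. replace (5*n+1)%nat with (S (5*n)) by lia. replace (5*n+2)%nat with (S (S (5*n))) by lia.
  replace (5*n+3)%nat with (S (S (S (5*n)))) by lia. replace (5*n+4)%nat with (S (S (S (S (5*n))))) by lia.
  ring. Qed.

Lemma div5 j b : (b < 5)%nat -> ((5*j+b)/5 = j)%nat /\ ((5*j+b) mod 5 = b)%nat.
Proof. intros Hb. split.
- rewrite Nat.mul_comm, Nat.div_add_l by lia. rewrite Nat.div_small by lia. lia.
- rewrite Nat.mul_comm, Nat.add_comm, Nat.Div0.mod_add. apply Nat.mod_small; lia. Qed.

Lemma dpl_ext f t l1 l2 : derivable_pt_lim f t l1 -> l1 = l2 -> derivable_pt_lim f t l2.
Proof. intros H ->; exact H. Qed.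

Lemma dpl_add f g t a b : derivable_pt_lim f t a -> derivable_pt_lim g t b ->
  derivable_pt_lim (fun s => f s + g s) t (a + b).
Proof. intros. apply (derivable_pt_lim_plus f g t a b); auto. Qed.

Lemma dpl_mul f g t a b : derivable_pt_lim f t a -> derivable_pt_lim g t b ->
  derivable_pt_lim (fun s => f s * g s) t (a * g t + f t * b).
Proof. intros. apply (derivable_pt_lim_mult f g t a b); auto. Qed.

Lemma dpl_cst c t : derivable_pt_lim (fun _ => c) t 0.
Proof. apply (derivable_pt_lim_const c t). Qed.

Lemma dpl_sum n (h : nat -> R -> R) (d : nat -> R) t :
  (forall i, (i < n)%nat -> derivable_pt_lim (h i) t (d i)) ->
  derivable_pt_lim (fun s => sumR n (fun i => h i s)) t (sumR n d).
Proof. induction n; intros H; simpl.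
- apply dpl_cst.
- apply dpl_add. apply IHn; intros; apply H; lia. apply H; lia. Qed.

Lemma small_list (l : list (R*R)) : Forall (fun ab => 0 < fst ab /\ 0 < snd ab) l ->
  exists e, 0 < e /\ Forall (fun ab => e * fst ab <= snd ab) l.
Proof. induction l as [|[a b] l IH]; intros H.
- exists 1; split; [lra| constructor].
- inversion H as [|x y [Ha Hb] Hl]; subst. simpl in Ha, Hb. destruct (IH Hl) as [e [He Hf]].
  exists (Rmin e (b/a)). split. apply Rmin_pos; [lra| apply Rdiv_lt_0_compat; lra].
  constructor.
  + simpl. assert (Rmin e (b/a) <= b/a) by apply Rmin_r.
    apply Rle_trans with (b/a*a). apply Rmult_le_compat_r; lra. right; field; lra.
  + eapply Forall_impl; [|exact (proj2 (Forall_forall _ _) (fun x Hx => conj (proj1 (Forall_forall _ _) Hl x Hx) (proj1 (Forall_forall _ _) Hf x Hx)))].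
    intros [a' b'] [[Ha' Hb'] Hle]. simpl in *. assert (Rmin e (b/a) <= e) by apply Rmin_l.
    apply Rle_trans with (e*a'); [apply Rmult_le_compat_r; lra| exact Hle].
Qed.

Lemma unif_min (N:nat) (P : nat -> R -> Prop) :
  (forall i r r', P i r -> 0 < r' <= r -> P i r') ->
  (forall i, (i<N)%nat -> exists r, 0<r /\ P i r) -> exists r, 0<r /\ forall i, (i<N)%nat -> P i r.
Proof. intros Hm. induction N; intros H.
- exists 1; split; [lra| intros; lia].
- destruct IHN as [r [Hr Hp]]. intros; apply H; lia.
  destruct (H N) as [r' [Hr' Hp']]; [lia|].
  exists (Rmin r r'). split. apply Rmin_pos; lra. intros i Hi.
  destruct (Nat.eq_dec i N) as [->|Hne].
  + apply Hm with r'; auto. split. apply Rmin_pos; lra. apply Rmin_r.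
  + apply Hm with r. apply Hp; lia. split. apply Rmin_pos; lra. apply Rmin_l.
Qed.

Lemma unif_max (N:nat) (P : nat -> R -> Prop) :
  (forall i r r', P i r -> r <= r' -> P i r') ->
  (forall i, (i<N)%nat -> exists r, 0<r /\ P i r) -> exists r, 0<r /\ forall i, (i<N)%nat -> P i r.
Proof. intros Hm. induction N; intros H.
- exists 1; split; [lra| intros; lia].
- destruct IHN as [r [Hr Hp]]. intros; apply H; lia.
  destruct (H N) as [r' [Hr' Hp']]; [lia|].
  exists (Rmax r r'). split. apply Rlt_le_trans with r; [lra|apply Rmax_l]. intros i Hi.
  destruct (Nat.eq_dec i N) as [->|Hne].
  + apply Hm with r'; auto. apply Rmax_r.
  + apply Hm with r. apply Hp; lia. apply Rmax_l.
Qed.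

Lemma sumR_minus n f g : sumR n (fun k => f k - g k) = sumR n f - sumR n g.
Proof. induction n; simpl; [ring|]. rewrite IHn; ring. Qed.


Definition Ddf (Lv Rv v1 v2 v3 : R) := (1-v1)*(Rv-v2) - Lv*v3.

Definition Wl (C L k1 k3 Lv Rv v1 v2 v3 e f : R) (V I p J q : R) : R :=
  C*(V*V) + (L/(1-k1))*(I*I) + (k3/(1-k1))*(p*p)
  + (Lv/(Ddf Lv Rv v1 v2 v3*(Rv-v2)))*(((Rv-v2)*J - v3*q)*((Rv-v2)*J - v3*q))
  + (v3/(Rv-v2))*(q*q) + (-(2*e*L))*(I*p) + (-(2*f*C))*(V*q).

Definition dWl (C L k1 k3 Lv Rv v1 v2 v3 e f : R) (V I p J q dV dI dp dJ dq : R) : R :=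
  2*(C*V*dV + L/(1-k1)*I*dI + k3/(1-k1)*p*dp
  + Lv/(Ddf Lv Rv v1 v2 v3*(Rv-v2))*((Rv-v2)*J - v3*q)*((Rv-v2)*dJ - v3*dq)
  + v3/(Rv-v2)*q*dq - e*L*(dI*p + I*dp) - f*C*(dV*q + V*dq)).

Lemma dpl_opp f t a : derivable_pt_lim f t a -> derivable_pt_lim (fun s => - f s) t (- a).
Proof. intros H. apply (derivable_pt_lim_opp f t a H). Qed.

Lemma dWl_spec C L k1 k3 Lv Rv v1 v2 v3 e f y0 y1 y2 y3 y4 t d0 d1 d2 d3 d4 :
  derivable_pt_lim y0 t d0 -> derivable_pt_lim y1 t d1 -> derivable_pt_lim y2 t d2 ->
  derivable_pt_lim y3 t d3 -> derivable_pt_lim y4 t d4 ->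
  derivable_pt_lim (fun s => Wl C L k1 k3 Lv Rv v1 v2 v3 e f (y0 s) (y1 s) (y2 s) (y3 s) (y4 s)) t
    (dWl C L k1 k3 Lv Rv v1 v2 v3 e f (y0 t) (y1 t) (y2 t) (y3 t) (y4 t) d0 d1 d2 d3 d4).
Proof. intros H0 H1 H2 H3 H4. unfold Wl. eapply dpl_ext.
  - repeat first [ apply dpl_add | apply dpl_mul | apply dpl_cst | eassumption ].
    all: try (unfold Rminus; repeat first [ apply dpl_add | apply dpl_mul | apply dpl_opp | apply dpl_cst | eassumption ]).
  - unfold dWl. cbv beta. ring.
Qed.


Definition Eloc (C L Rc Lv Rv RL k1 k2 k3 v1 v2 v3 e f : R) (V I p J q : R) : R :=
 dWl C L k1 k3 Lv Rv v1 v2 v3 e f V I p J q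
  (-(1/(RL*C))*V + 1/C*I + 1/C*J)
  ((k1-1)/L*V + (k2-Rc)/L*I + k3/L*p)
  (-I)
  ((v1-1)/Lv*V + (v2-Rv)/Lv*J + v3/Lv*q)
  (-V).

Ltac pos := repeat (first [ lra | apply Rmult_lt_0_compat | apply Rdiv_lt_0_compat | apply Rinv_0_lt_compat | apply Rplus_lt_0_compat ]).

Lemma cmul a b x : a <= b -> a * (x*x) <= b * (x*x).
Proof. intros. apply Rmult_le_compat_r; [apply Rle_0_sqr|lra]. Qed.

Lemma sqx x : 0 <= x*x.
Proof. apply Rle_0_sqr. Qed.

Lemma local_lemma (C L Rc Lv Rv RL k1 k2 k3 v1 v2 v3 Dg : R) :
 0<C -> 0<L -> 0<Rc -> 0<Lv -> 0<Rv -> 0<RL -> 0 <= Dg ->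
 k1<1 -> k2<Rc -> 0<k3 -> v1<1 -> v2<Rv -> 0<v3 -> v3 < 1/Lv*(v1-1)*(v2-Rv) ->
 exists e f, 0<e /\ 0<f /\
  (exists m, 0<m /\ forall V I p J q,
      m*(V^2+I^2+p^2+J^2+q^2) <= Wl C L k1 k3 Lv Rv v1 v2 v3 e f V I p J q) /\
  (exists M, 0<M /\ forall V I p J q,
      Wl C L k1 k3 Lv Rv v1 v2 v3 e f V I p J q <= M*(V^2+I^2+p^2+J^2+q^2)) /\
  (exists eta, 0<eta /\ forall V I p J q,
      Eloc C L Rc Lv Rv RL k1 k2 k3 v1 v2 v3 e f V I p J q + f*f*Dg*(q*q)
        <= - eta*(V^2+I^2+p^2+J^2+q^2)).
Proof.
  intros HC HL HR HLv HRv HRL HDg Hk1 Hk2 Hk3 Hv1 Hv2 Hv3 Hv3'.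
  assert (HDd : 0 < Ddf Lv Rv v1 v2 v3).
  { unfold Ddf. replace (1/Lv*(v1-1)*(v2-Rv)) with ((1-v1)*(Rv-v2)/Lv) in Hv3' by (field; lra).
    apply Rmult_lt_compat_l with (r:=Lv) in Hv3'; [|lra].
    replace (Lv*((1-v1)*(Rv-v2)/Lv)) with ((1-v1)*(Rv-v2)) in Hv3' by (field; lra). lra. }
  remember (1 - k1) as A eqn:eA. remember (Rc - k2) as B eqn:eB. remember k3 as K eqn:eK.
  remember (Rv - v2) as B' eqn:eB'. remember v3 as K' eqn:eK'.
  remember (Ddf Lv Rv v1 v2 v3) as Dd eqn:eDd.
  assert (HA : 0 < A) by lra. assert (HB : 0 < B) by lra. assert (HK : 0 < K) by lra.
  assert (HB' : 0 < B') by lra. assert (HK' : 0 < K') by lra.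
  remember (/RL) as iRL eqn:eiRL. remember (/A) as iA eqn:eiA. remember (/K) as iK eqn:eiK.
  remember (/B') as iB' eqn:eiB'. remember (/Dd) as iDd eqn:eiDd.
  remember (K' * iB') as kap eqn:ekap. remember (/kap) as ikap eqn:eikap.
  assert (HiRL : 0 < iRL) by (subst; pos). assert (HiA : 0 < iA) by (subst; pos).
  assert (HiK : 0 < iK) by (subst; pos). assert (HiB' : 0 < iB') by (subst; pos).
  assert (HiDd : 0 < iDd) by (subst; pos). assert (Hkap : 0 < kap) by (subst; pos).
  assert (Hikap : 0 < ikap) by (subst; pos).
  assert (I1 : RL*iRL = 1) by (subst; field; lra). assert (I2 : A*iA = 1) by (subst; field; lra).
  assert (I3 : K*iK = 1) by (subst; field; lra). assert (I4 : B'*iB' = 1) by (subst; field; lra).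
  assert (I5 : Dd*iDd = 1) by (subst; field; lra). assert (I6 : kap*ikap = 1) by (subst; field; lra).
  destruct (small_list [(A*A*iK, iRL/4); (B*B*iK + L, B*iA/4); (1, iA/2); (L, K*iA/2)]) as [e [He Hel]].
  { repeat constructor; simpl; pos. }
  destruct (small_list [(C + 3*ikap*iRL*iRL/2, iRL/4); (3*ikap/2, B*iA/4); (3*ikap*iB'*iB'/2, iDd/2);
                        (Dg+1, kap/2); (1, 1/2); (C, kap/2)]) as [f [Hf Hfl]].
  { repeat constructor; simpl; pos. }
  rewrite !Forall_cons_iff in Hel. rewrite !Forall_cons_iff in Hfl. simpl in Hel, Hfl.
  destruct Hel as [He1 [He2 [He3 [He4 _]]]].
  destruct Hfl as [Hf1 [Hf2 [Hf3 [Hf4 [Hf5 [Hf6 _]]]]]].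
  assert (Wl_eq : forall V I p J q, Wl C L k1 K Lv Rv v1 v2 K' e f V I p J q =
     C*(V*V) + L*iA*(I*I) + K*iA*(p*p) + Lv*iDd*iB'*((B'*J-K'*q)*(B'*J-K'*q)) + kap*(q*q)
     - 2*e*L*(I*p) - 2*f*C*(V*q)).
  { intros. unfold Wl. subst. field. split; lra. }
  assert (El_eq : forall V I p J q, Eloc C L Rc Lv Rv RL k1 k2 K v1 v2 K' e f V I p J q =
     2*( -iRL*(V*V) - B*iA*(I*I) - iDd*((B'*J-K'*q)*(B'*J-K'*q))
         + e*(-K*(p*p) + (A*V+B*I)*p + L*(I*I))
         + f*((iRL*V - I - iB'*(B'*J-K'*q))*q - kap*(q*q) + C*(V*V)) )).
  { intros. unfold Eloc, dWl. subst. unfold Ddf in *. field. repeat split; lra. }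
  clear eA eB eK eB' eK' eDd eiRL eiA eiK eiB' eiDd eikap.
  exists e, f. split; [exact He|]. split; [exact Hf|].
  split; [|split].
  - destruct (small_list [(1, C/2); (1, L*iA/2); (1, K*iA/2); (2*iB'*iB', Lv*iDd*iB'); (2*K'*K'*iB'*iB'+1, kap/2)])
      as [m [Hm Hml]].
    { repeat constructor; simpl; pos. }
    rewrite !Forall_cons_iff in Hml. simpl in Hml.
    destruct Hml as [Hm1 [Hm2 [Hm3 [Hm4 [Hm5 _]]]]].
    exists m. split; [exact Hm|]. intros V I p J q. rewrite Wl_eq.
    remember (B'*J - K'*q) as z eqn:ez.
    assert (HJ : J = iB'*(z+K'*q)).
    { rewrite ez. replace (B'*J-K'*q+K'*q) with (B'*J) by ring. rewrite <- Rmult_assoc, (Rmult_comm iB'), I4; ring. }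
    assert (HJ2 : J*J <= 2*iB'*iB'*(z*z) + 2*K'*K'*iB'*iB'*(q*q)).
    { assert (0 <= (iB'*(z-K'*q))*(iB'*(z-K'*q))) by apply sqx. rewrite HJ. lra. }
    assert (Y6 : m*(J*J) <= m*(2*iB'*iB'*(z*z) + 2*K'*K'*iB'*iB'*(q*q))) by (apply Rmult_le_compat_l; lra).
    assert (Y1 := cmul _ _ V Hm1). assert (Y2 := cmul _ _ I Hm2). assert (Y3 := cmul _ _ p Hm3).
    assert (Y4 := cmul _ _ z Hm4). assert (Y5 := cmul _ _ q Hm5).
    assert (B1 : e*L <= iA/2*L) by (apply Rmult_le_compat_r; lra).
    assert (C1 := cmul _ _ I B1). assert (C2 := cmul _ _ p He4).
    assert (D1 : 0 <= e*L*((I-p)*(I-p))) by (apply Rmult_le_pos; [apply Rmult_le_pos; lra| apply sqx]).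
    assert (B2 : f*C <= 1/2*C) by (apply Rmult_le_compat_r; lra).
    assert (C3 := cmul _ _ V B2). assert (C4 := cmul _ _ q Hf6).
    assert (D2 : 0 <= f*C*((V-q)*(V-q))) by (apply Rmult_le_pos; [apply Rmult_le_pos; lra| apply sqx]).
    replace (V^2+I^2+p^2+J^2+q^2) with (V*V+I*I+p*p+J*J+q*q) by ring.
    lra.
  - exists (3*C/2 + 3*L*iA/2 + 3*K*iA/2 + Lv*iDd*iB'*(2*B'*B' + 2*K'*K') + 3*kap/2).
    split; [pos; nra|].
    intros V I p J q. rewrite Wl_eq.
    remember (Lv*iDd*iB') as c eqn:ec. assert (Hc : 0 < c) by (subst; pos). clear ec.
    remember (3*C/2 + 3*L*iA/2 + 3*K*iA/2 + c*(2*B'*B' + 2*K'*K') + 3*kap/2) as M eqn:eM.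
    assert (0 <= c*(2*B'*B')) by (apply Rmult_le_pos; nra).
    assert (0 <= c*(2*K'*K')) by (apply Rmult_le_pos; nra).
    assert (0 < L*iA) by pos. assert (0 < K*iA) by pos.
    assert (M1 : 3*C/2 <= M) by (rewrite eM; nra).
    assert (M2 : 3*L*iA/2 <= M) by (rewrite eM; nra).
    assert (M3 : 3*K*iA/2 <= M) by (rewrite eM; nra).
    assert (M4 : c*(2*B'*B') <= M) by (rewrite eM; nra).
    assert (M5 : 3*kap/2 + c*(2*K'*K') <= M) by (rewrite eM; nra).
    clear eM.
    assert (Z : 0 <= c*((B'*J+K'*q)*(B'*J+K'*q))) by (apply Rmult_le_pos; [lra|apply sqx]).
    assert (Y1 := cmul _ _ V M1). assert (Y2 := cmul _ _ I M2). assert (Y3 := cmul _ _ p M3).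
    assert (Y4 := cmul _ _ J M4). assert (Y5 := cmul _ _ q M5).
    assert (B1 : e*L <= iA/2*L) by (apply Rmult_le_compat_r; lra).
    assert (C1 := cmul _ _ I B1). assert (C2 := cmul _ _ p He4).
    assert (D1 : 0 <= e*L*((I+p)*(I+p))) by (apply Rmult_le_pos; [apply Rmult_le_pos; lra| apply sqx]).
    assert (B2 : f*C <= 1/2*C) by (apply Rmult_le_compat_r; lra).
    assert (C3 := cmul _ _ V B2). assert (C4 := cmul _ _ q Hf6).
    assert (D2 : 0 <= f*C*((V+q)*(V+q))) by (apply Rmult_le_pos; [apply Rmult_le_pos; lra| apply sqx]).
    replace (V^2+I^2+p^2+J^2+q^2) with (V*V+I*I+p*p+J*J+q*q) by ring.
    lra.
  - destruct (small_list [(1, iRL/2); (1, B*iA/2); (1, e*K/2); (2*iB'*iB', iDd/2); (2*K'*K'*iB'*iB'+1, f*kap/4)])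
      as [eta [Heta Hetl]].
    { repeat constructor; simpl; pos. }
    rewrite !Forall_cons_iff in Hetl. simpl in Hetl.
    destruct Hetl as [Hm1 [Hm2 [Hm3 [Hm4 [Hm5 _]]]]].
    exists eta. split; [exact Heta|]. intros V I p J q. rewrite El_eq.
    remember (B'*J - K'*q) as z eqn:ez.
    assert (HJ : J = iB'*(z+K'*q)).
    { rewrite ez. replace (B'*J-K'*q+K'*q) with (B'*J) by ring. rewrite <- Rmult_assoc, (Rmult_comm iB'), I4; ring. }
    assert (HJ2 : J*J <= 2*iB'*iB'*(z*z) + 2*K'*K'*iB'*iB'*(q*q)).
    { assert (0 <= (iB'*(z-K'*q))*(iB'*(z-K'*q))) by apply sqx. rewrite HJ. lra. }
    assert (Y6 : eta*(J*J) <= eta*(2*iB'*iB'*(z*z) + 2*K'*K'*iB'*iB'*(q*q))) by (apply Rmult_le_compat_l; lra).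
    assert (Y1 := cmul _ _ V Hm1). assert (Y2 := cmul _ _ I Hm2). assert (Y3 := cmul _ _ p Hm3).
    assert (Y4 := cmul _ _ z Hm4). assert (Y5 := cmul _ _ q Hm5).
    assert (F1 : -K*(p*p) + (A*V+B*I)*p <= -(K/2)*(p*p) + iK*(A*A*(V*V) + B*B*(I*I))).
    { remember (-(K/2)*(p*p) + iK*(A*A*(V*V) + B*B*(I*I)) - (-K*(p*p) + (A*V+B*I)*p)) as d eqn:ed.
      assert (Hd : K*d - ((K*p-(A*V+B*I))*(K*p-(A*V+B*I)) + (A*V-B*I)*(A*V-B*I))/2
                   = (K*iK - 1)*(A*A*(V*V)+B*B*(I*I))) by (rewrite ed; field).
      rewrite I3 in Hd.
      assert (0 <= (K*p-(A*V+B*I))*(K*p-(A*V+B*I))) by apply sqx.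
      assert (0 <= (A*V-B*I)*(A*V-B*I)) by apply sqx.
      assert (0 <= K*d) by lra.
      destruct (Rle_or_lt 0 d); [|nra]. lra. }
    assert (E1 : e*(-K*(p*p) + (A*V+B*I)*p) <= e*(-(K/2)*(p*p) + iK*(A*A*(V*V) + B*B*(I*I))))
      by (apply Rmult_le_compat_l; lra).
    assert (HfD : f*Dg <= kap/2) by lra.
    remember (iRL*V - I - iB'*z) as W eqn:eW.
    assert (F2 : W*q - kap*(q*q) + (f*Dg/2)*(q*q) <= ikap/2*(W*W) - kap/4*(q*q)).
    { assert (Hd : ikap/2*((W - kap*q)*(W - kap*q)) - (ikap/2*(W*W) - W*q + kap/2*(q*q))
                   = (kap*ikap - 1)*(kap*(q*q)/2 - W*q)) by field.
      rewrite I6 in Hd.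
      assert (0 <= ikap/2*((W - kap*q)*(W - kap*q))) by (apply Rmult_le_pos; [lra|apply sqx]).
      assert (f*Dg/2 <= kap/4) by lra.
      assert (X := cmul _ _ q H0). lra. }
    assert (F3 : W*W <= 3*(iRL*iRL*(V*V) + I*I + iB'*iB'*(z*z))).
    { rewrite eW. assert (0 <= (iRL*V + I)*(iRL*V + I)) by apply sqx.
      assert (0 <= (iRL*V + iB'*z)*(iRL*V + iB'*z)) by apply sqx.
      assert (0 <= (I - iB'*z)*(I - iB'*z)) by apply sqx. lra. }
    assert (E2 : f*(W*q - kap*(q*q) + (f*Dg/2)*(q*q)) <= f*(ikap/2*(W*W) - kap/4*(q*q)))
      by (apply Rmult_le_compat_l; lra).
    assert (E3 : f*ikap/2*(W*W) <= f*ikap/2*(3*(iRL*iRL*(V*V) + I*I + iB'*iB'*(z*z))))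
      by (apply Rmult_le_compat_l; [left; pos| lra]).
    assert (G1 := cmul _ _ V He1). assert (G2 := cmul _ _ I He2).
    assert (G3 := cmul _ _ V Hf1). assert (G4 := cmul _ _ I Hf2). assert (G5 := cmul _ _ z Hf3).
    assert (0 <= eta*(V*V+I*I+p*p+J*J+q*q)).
    { apply Rmult_le_pos; [lra|]. assert (T1 := sqx V). assert (T2 := sqx I). assert (T3 := sqx p). assert (T4 := sqx J). assert (T5 := sqx q). lra. }
    replace (V^2+I^2+p^2+J^2+q^2) with (V*V+I*I+p*p+J*J+q*q) by ring.
    lra.
Qed.


Section Rows.
Variables (N : nat) (adj : nat -> nat -> bool) (Rl : nat -> nat -> R)
  (Ct LCt RCt LVt RVt RL kC1 kC2 kC3 kV1 kV2 kV3 : nat -> R).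

Lemma Fmat_entry i j a b : (a < 5)%nat -> (b < 5)%nat ->
  Fmat N adj Rl Ct LCt RCt LVt RVt RL kC1 kC2 kC3 kV1 kV2 kV3 (5*i+a) (5*j+b) =
  if Nat.eqb i j then
    Floc (Ct i) (LCt i) (RCt i) (LVt i) (RVt i) (kC1 i) (kC2 i) (kC3 i) (kV1 i) (kV2 i) (kV3 i) a b
    - (if andb (Nat.eqb a 0) (Nat.eqb b 0) then
         1 / (RL i * Ct i) + sumR N (fun m => if adj i m then 1 / (Rl i m * Ct i) else 0)
       else 0)
  else if andb (andb (Nat.eqb a 0) (Nat.eqb b 0)) (adj i j) then 1 / (Rl i j * Ct i) else 0.
Proof. intros Ha Hb. unfold Fmat. destruct (div5 i a Ha) as [-> ->]. destruct (div5 j b Hb) as [-> ->].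
  reflexivity. Qed.

Definition Fx (x : nat -> R) k := sumR (5*N) (fun l => Fmat N adj Rl Ct LCt RCt LVt RVt RL kC1 kC2 kC3 kV1 kV2 kV3 k l * x l).

Hypothesis Hadj_irr : forall i, adj i i = false.

Lemma row_other (x : nat -> R) i a (g : nat -> R) : (i < N)%nat -> (0 < a < 5)%nat ->
  (forall b, (b < 5)%nat -> Floc (Ct i) (LCt i) (RCt i) (LVt i) (RVt i) (kC1 i) (kC2 i) (kC3 i) (kV1 i) (kV2 i) (kV3 i) a b = g b) ->
  Fx x (5*i+a) = g 0%nat * x (5*i)%nat + g 1%nat * x (5*i+1)%nat + g 2%nat * x (5*i+2)%nat + g 3%nat * x (5*i+3)%nat + g 4%nat * x (5*i+4)%nat.
Proof. intros Hi Ha Hg. unfold Fx. rewrite sumR_block5.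
  rewrite (sumR_ext _ _ (fun j => if Nat.eqb i j then
     g 0%nat * x (5*j)%nat + g 1%nat * x (5*j+1)%nat + g 2%nat * x (5*j+2)%nat + g 3%nat * x (5*j+3)%nat + g 4%nat * x (5*j+4)%nat else 0)).
  - rewrite sumR_delta by exact Hi. reflexivity.
  - intros j Hj.
    repeat (rewrite Fmat_entry by lia).
    assert (Nat.eqb a 0 = false) as -> by (apply Nat.eqb_neq; lia). simpl andb.
    destruct (Nat.eqb_spec i j) as [<-|Hne].
    + rewrite !Hg by lia. replace (5*i+0)%nat with (5*i)%nat by lia. rewrite ?Nat.add_0_r. ring.
    + ring.
Qed.

Lemma row0 (x : nat -> R) i : (i < N)%nat ->
  Fx x (5*i) = -(1/(RL i*Ct i))*x (5*i)%nat + 1/Ct i*x (5*i+1)%nat + 1/Ct i*x (5*i+3)%nat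
     + sumR N (fun j => if adj i j then (x (5*j)%nat - x (5*i)%nat)/(Rl i j*Ct i) else 0).
Proof. intros Hi. unfold Fx. rewrite sumR_block5.
  set (S := sumR N (fun m => if adj i m then 1 / (Rl i m * Ct i) else 0)).
  rewrite (sumR_ext _ _ (fun j => (if Nat.eqb i j then
     (0 - (1 / (RL i * Ct i) + S)) * x (5*j)%nat + 1/Ct i * x (5*j+1)%nat + 1/Ct i * x (5*j+3)%nat else 0)
     + (if adj i j then x (5*j)%nat / (Rl i j * Ct i) else 0))).
  - rewrite sumR_plus, sumR_delta by exact Hi.
    rewrite (sumR_ext N (fun j => if adj i j then (x (5*j)%nat - x (5*i)%nat)/(Rl i j*Ct i) else 0)
      (fun j => (if adj i j then x (5*j)%nat / (Rl i j * Ct i) else 0) + (- x (5*i)%nat) * (if adj i j then 1 / (Rl i j * Ct i) else 0))).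
    + rewrite sumR_plus, sumR_scal. fold S. ring.
    + intros j Hj. destruct (adj i j); unfold Rdiv; ring.
  - intros j Hj. replace (5*i)%nat with (5*i+0)%nat by lia.
    repeat (rewrite Fmat_entry by lia). simpl andb.
    destruct (Nat.eqb_spec i j) as [<-|Hne].
    + rewrite Hadj_irr. fold S. simpl. rewrite ?Nat.add_0_r. ring.
    + destruct (adj i j); cbn [andb]; rewrite ?Nat.add_0_r; unfold Rdiv; ring.
Qed.

End Rows.


Lemma coupling N (adj : nat -> nat -> bool) (Rl : nat -> nat -> R) (C f V q : nat -> R) :
  (forall i j, adj i j = adj j i) ->
  (forall i j, adj i j = true -> Rl i j = Rl j i /\ 0 < Rl i j) ->
  (forall i j, adj i j = true -> (i < N)%nat /\ (j < N)%nat) ->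
  (forall i, (i<N)%nat -> 0 < C i) ->
  sumR N (fun i => (C i * V i - f i * C i * q i) * sumR N (fun j => if adj i j then (V j - V i)/(Rl i j * C i) else 0))
  <= sumR N (fun i => f i * f i / 2 * sumR N (fun j => if adj i j then 1/Rl i j else 0) * (q i * q i)).
Proof.
  intros Hsym HR Hin HC.
  set (h := fun i j => if adj i j then
        (C i * V i - f i * C i * q i) * ((V j - V i)/(Rl i j * C i)) - f i * f i / 2 * (1/Rl i j) * (q i * q i) else 0).
  assert (Heq : sumR N (fun i => (C i * V i - f i * C i * q i) * sumR N (fun j => if adj i j then (V j - V i)/(Rl i j * C i) else 0))
     - sumR N (fun i => f i * f i / 2 * sumR N (fun j => if adj i j then 1/Rl i j else 0) * (q i * q i))
     = sumR N (fun i => sumR N (fun j => h i j))).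
  { assert (E1 : sumR N (fun i => (C i * V i - f i * C i * q i) * sumR N (fun j => if adj i j then (V j - V i)/(Rl i j * C i) else 0))
       = sumR N (fun i => sumR N (fun j => (C i * V i - f i * C i * q i) * (if adj i j then (V j - V i)/(Rl i j * C i) else 0)))).
    { apply sumR_ext; intros i Hi. rewrite sumR_scal. reflexivity. }
    assert (E2 : sumR N (fun i => f i * f i / 2 * sumR N (fun j => if adj i j then 1/Rl i j else 0) * (q i * q i))
       = sumR N (fun i => sumR N (fun j => (f i * f i / 2 * (q i * q i)) * (if adj i j then 1/Rl i j else 0)))).
    { apply sumR_ext; intros i Hi. rewrite sumR_scal. ring. }
    rewrite E1, E2, <- sumR_minus. apply sumR_ext; intros i Hi. rewrite <- sumR_minus.
    apply sumR_ext; intros j Hj. unfold h. destruct (adj i j); ring. }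
  assert (Hswap : sumR N (fun i => sumR N (fun j => h i j)) = sumR N (fun i => sumR N (fun j => h j i))).
  { rewrite sumR_swap. reflexivity. }
  assert (Hneg : sumR N (fun i => sumR N (fun j => h i j + h j i)) <= 0).
  { rewrite <- (sumR_0 N). apply sumR_le. intros i Hi. rewrite <- (sumR_0 N). apply sumR_le. intros j Hj.
    unfold h. rewrite (Hsym j i). destruct (adj i j) eqn:Ea; [|lra].
    destruct (HR i j Ea) as [Hr Hpos]. rewrite <- Hr.
    assert (0 < C i) by (apply HC; lia). assert (0 < C j) by (apply HC; lia).
    set (r := Rl i j) in *.
    replace ((C i * V i - f i * C i * q i) * ((V j - V i) / (r * C i)) - f i * f i / 2 * (1 / r) * (q i * q i) +
      ((C j * V j - f j * C j * q j) * ((V i - V j) / (r * C j)) - f j * f j / 2 * (1 / r) * (q j * q j)))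
      with (-(/(2*r)) * ((V j - V i + f i * q i)*(V j - V i + f i * q i) + (V j - V i - f j * q j)*(V j - V i - f j * q j)))
      by (field; lra).
    assert (0 < /(2*r)) by (apply Rinv_0_lt_compat; lra).
    assert (0 <= (V j - V i + f i * q i)*(V j - V i + f i * q i)) by apply Rle_0_sqr.
    assert (0 <= (V j - V i - f j * q j)*(V j - V i - f j * q j)) by apply Rle_0_sqr.
    clearbody r. nra. }
  rewrite sumR_swap in Hswap. 
  assert (sumR N (fun i => sumR N (fun j => h i j + h j i)) = 2 * sumR N (fun i => sumR N (fun j => h i j))).
  { rewrite (sumR_ext N _ (fun i => sumR N (fun j => h i j) + sumR N (fun j => h j i))).
    rewrite sumR_plus. rewrite (sumR_swap N N (fun i j => h j i)). simpl. ring.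
    intros; apply sumR_plus. }
  lra.
Qed.


Section Glue.
Variables (N : nat) (adj : nat -> nat -> bool) (Rl : nat -> nat -> R)
  (Ct LCt RCt LVt RVt RL kC1 kC2 kC3 kV1 kV2 kV3 : nat -> R) (e f : nat -> R).

Definition Wi (y : nat -> R) i := Wl (Ct i) (LCt i) (kC1 i) (kC3 i) (LVt i) (RVt i) (kV1 i) (kV2 i) (kV3 i) (e i) (f i)
   (y (5*i+0)%nat) (y (5*i+1)%nat) (y (5*i+2)%nat) (y (5*i+3)%nat) (y (5*i+4)%nat).
Definition Wg (y : nat -> R) := sumR N (Wi y).
Definition sq5 (y : nat -> R) i := y (5*i+0)%nat ^2 + y (5*i+1)%nat ^2 + y (5*i+2)%nat ^2 + y (5*i+3)%nat ^2 + y (5*i+4)%nat ^2.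
Definition Sq (y : nat -> R) := sumR (5*N) (fun k => y k ^ 2).
Definition FX y k := Fx N adj Rl Ct LCt RCt LVt RVt RL kC1 kC2 kC3 kV1 kV2 kV3 y k.
Definition Di (y : nat -> R) i := dWl (Ct i) (LCt i) (kC1 i) (kC3 i) (LVt i) (RVt i) (kV1 i) (kV2 i) (kV3 i) (e i) (f i)
   (y (5*i+0)%nat) (y (5*i+1)%nat) (y (5*i+2)%nat) (y (5*i+3)%nat) (y (5*i+4)%nat)
   (FX y (5*i+0)%nat) (FX y (5*i+1)%nat) (FX y (5*i+2)%nat) (FX y (5*i+3)%nat) (FX y (5*i+4)%nat).
Definition Dg i := sumR N (fun j => if adj i j then 1/Rl i j else 0).
Definition Ei (y : nat -> R) i := Eloc (Ct i) (LCt i) (RCt i) (LVt i) (RVt i) (RL i) (kC1 i) (kC2 i) (kC3 i) (kV1 i) (kV2 i) (kV3 i) (e i) (f i)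
   (y (5*i+0)%nat) (y (5*i+1)%nat) (y (5*i+2)%nat) (y (5*i+3)%nat) (y (5*i+4)%nat).

Lemma Sq_eq y : Sq y = sumR N (sq5 y).
Proof. unfold Sq. rewrite sumR_block5. reflexivity. Qed.

Lemma W_deriv (x : R -> nat -> R) t :
  is_solution (5*N) (Fmat N adj Rl Ct LCt RCt LVt RVt RL kC1 kC2 kC3 kV1 kV2 kV3) x ->
  derivable_pt_lim (fun s => Wg (x s)) t (sumR N (Di (x t))).
Proof. intros Hs. unfold Wg. apply (dpl_sum N (fun i s => Wi (x s) i)). intros i Hi.
  unfold Wi, Di. apply dWl_spec; apply Hs; lia. Qed.

Hypothesis Hadj_irr : forall i, adj i i = false.
Hypothesis Hadj_sym : forall i j, adj i j = adj j i.
Hypothesis Hadj_in : forall i j, adj i j = true -> (i < N)%nat /\ (j < N)%nat.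
Hypothesis HRl : forall i j, adj i j = true -> Rl i j = Rl j i /\ 0 < Rl i j.
Hypothesis HCt : forall i, (i < N)%nat -> 0 < Ct i.

Lemma Di_eq y i : (i < N)%nat -> Di y i = Ei y i +
   2 * ((Ct i * y (5*i+0)%nat - f i * Ct i * y (5*i+4)%nat) *
        sumR N (fun j => if adj i j then (y (5*j)%nat - y (5*i)%nat)/(Rl i j*Ct i) else 0)).
Proof. intros Hi. unfold Di, Ei, FX.
  rewrite Nat.add_0_r. rewrite (row0 N adj Rl Ct LCt RCt LVt RVt RL kC1 kC2 kC3 kV1 kV2 kV3 Hadj_irr y i Hi).
  rewrite (row_other N adj Rl Ct LCt RCt LVt RVt RL kC1 kC2 kC3 kV1 kV2 kV3 y i 1
     (fun b => match b with 0 => (kC1 i - 1)/LCt i | 1 => (kC2 i - RCt i)/LCt i | 2 => kC3 i/LCt i | _ => 0 end)) by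
     (try lia; intros b Hb; destruct b as [|[|[|[|[|b]]]]]; try reflexivity; lia).
  rewrite (row_other N adj Rl Ct LCt RCt LVt RVt RL kC1 kC2 kC3 kV1 kV2 kV3 y i 2
     (fun b => match b with 1 => -1 | _ => 0 end)) by
     (try lia; intros b Hb; destruct b as [|[|[|[|[|b]]]]]; try reflexivity; lia).
  rewrite (row_other N adj Rl Ct LCt RCt LVt RVt RL kC1 kC2 kC3 kV1 kV2 kV3 y i 3
     (fun b => match b with 0 => (kV1 i - 1)/LVt i | 3 => (kV2 i - RVt i)/LVt i | 4 => kV3 i/LVt i | _ => 0 end)) by
     (try lia; intros b Hb; destruct b as [|[|[|[|[|b]]]]]; try reflexivity; lia).
  rewrite (row_other N adj Rl Ct LCt RCt LVt RVt RL kC1 kC2 kC3 kV1 kV2 kV3 y i 4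
     (fun b => match b with 0 => -1 | _ => 0 end)) by
     (try lia; intros b Hb; destruct b as [|[|[|[|[|b]]]]]; try reflexivity; lia).
  rewrite ?Nat.add_0_r.
  unfold Eloc, dWl. ring.
Qed.

Lemma D_bound y eta :
  (forall i, (i < N)%nat -> Ei y i + f i * f i * Dg i * (y (5*i+4)%nat * y (5*i+4)%nat) <= - eta * sq5 y i) ->
  sumR N (Di y) <= - eta * Sq y.
Proof. intros Hloc.
  rewrite (sumR_ext N (Di y) (fun i => Ei y i + 2 * ((Ct i * y (5*i)%nat - f i * Ct i * y (5*i+4)%nat) *
        sumR N (fun j => if adj i j then (y (5*j)%nat - y (5*i)%nat)/(Rl i j*Ct i) else 0))))
    by (intros i Hi; rewrite Di_eq by exact Hi; rewrite Nat.add_0_r; reflexivity).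
  rewrite sumR_plus, sumR_scal.
  assert (Hc := coupling N adj Rl Ct f (fun i => y (5*i)%nat) (fun i => y (5*i+4)%nat) Hadj_sym HRl Hadj_in HCt).
  cbv beta in Hc.
  assert (Hs : sumR N (Ei y) + 2 * sumR N (fun i => f i * f i / 2 * sumR N (fun j => if adj i j then 1/Rl i j else 0) * (y (5*i+4)%nat * y (5*i+4)%nat))
             <= - eta * Sq y).
  { rewrite <- sumR_scal, <- sumR_plus, Sq_eq, <- sumR_scal. apply sumR_le. intros i Hi.
    specialize (Hloc i Hi). unfold Dg in Hloc. lra. }
  lra.
Qed.

End Glue.


Lemma sqrt_lt_sq S d : 0 <= S -> sqrt S < d -> S < d*d.
Proof. intros HS H. assert (H1 := sqrt_sqrt S HS). assert (H2 := sqrt_pos S). nra. Qed.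

Lemma sq_lt_sqrt S d : 0 <= S -> 0 < d -> S < d*d -> sqrt S < d.
Proof. intros HS Hd H. rewrite <- (sqrt_square d) by lra. apply sqrt_lt_1_alt. lra. Qed.

Lemma abstract_decay (W Sq D : R -> R) m M eta :
 0<m -> 0<M -> 0<eta -> (forall t, derivable_pt_lim W t (D t)) ->
 (forall t, m*Sq t <= W t /\ W t <= M*Sq t) -> (forall t, D t <= -eta*Sq t) -> (forall t, 0 <= Sq t) ->
 forall t, 0 <= t -> m * Sq t * (1 + eta/M * t) <= M * Sq 0.
Proof.
  intros Hm HM Heta HD HW HDb HS t Ht.
  set (c := eta/M). assert (Hc : 0 < c) by (unfold c; apply Rdiv_lt_0_compat; lra).
  assert (HcM : c * M = eta) by (unfold c; field; lra). clearbody c.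
  assert (Hg : forall s, 0 <= s -> (1 + c*t) * W t <= W 0 \/ t = 0).
  { intros _ _. destruct (Req_dec t 0) as [->|Hne]; [right; reflexivity|left].
    destruct (MVT_cor2 (fun s => (1 + c*s) * W s) (fun s => c * W s + (1 + c*s) * D s) 0 t) as [xi [Hxi Hr]].
    - lra.
    - intros s _. eapply dpl_ext.
      + apply dpl_mul; [|apply HD]. apply dpl_add; [apply dpl_cst|].
        eapply dpl_ext; [apply dpl_mul; [apply dpl_cst | apply derivable_pt_lim_id]|]. reflexivity.
      + unfold id. ring.
    - cbv beta in Hr. assert (c * W xi + (1 + c*xi) * D xi <= 0).
      { destruct (HW xi) as [Hl Hu]. specialize (HDb xi). specialize (HS xi).
        assert (0 <= W xi) by nra.
        assert ((1 + c*xi) * D xi <= (1+c*xi) * (-eta * Sq xi)) by (apply Rmult_le_compat_l; [assert (0 <= c*xi) by (apply Rmult_le_pos; lra); lra | lra]).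
        assert (c * W xi <= eta * Sq xi) by nra.
        assert (0 <= c*xi) by (apply Rmult_le_pos; lra).
        assert (0 <= eta*Sq xi) by (apply Rmult_le_pos; lra).
        assert (0 <= (c*xi)*(eta*Sq xi)) by (apply Rmult_le_pos; lra).
        lra. }
      assert (0 < t) by lra. nra. }
  destruct (HW t) as [Hl Hu]. destruct (HW 0) as [Hl0 Hu0]. specialize (HS t).
  destruct (Hg 0 (Rle_refl 0)) as [H|H].
  - replace (eta/M) with c by (rewrite <- HcM; field; lra).
    assert (0 <= (1 + c*t)*(W t - m*Sq t)) by (apply Rmult_le_pos; [assert (0 <= c*t) by (apply Rmult_le_pos; lra); lra | lra]).
    lra.
  - subst t. replace (1 + eta/M*0) with 1 by ring. lra.
Qed.


Theorem theorem2 (N : nat) (adj : nat -> nat -> bool) (Rl : nat -> nat -> R)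
  (Ct LCt RCt LVt RVt RL kC1 kC2 kC3 kV1 kV2 kV3 : nat -> R) :
  (1 <= N)%nat ->
  is_undirected_graph N adj ->
  graph_connected N adj ->
  (forall i, (i < N)%nat ->
     0 < Ct i /\ 0 < LCt i /\ 0 < RCt i /\ 0 < LVt i /\ 0 < RVt i /\ 0 < RL i) ->
  (forall i j, adj i j = true -> Rl i j = Rl j i /\ 0 < Rl i j) ->
  (forall i, (i < N)%nat ->
     kC1 i < 1 /\ kC2 i < RCt i /\ 0 < kC3 i /\
     kV1 i < 1 /\ kV2 i < RVt i /\
     0 < kV3 i /\ kV3 i < (1 / LVt i) * (kV1 i - 1) * (kV2 i - RVt i)) ->
  origin_asymptotically_stable (5 * N)
    (Fmat N adj Rl Ct LCt RCt LVt RVt RL kC1 kC2 kC3 kV1 kV2 kV3).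
Proof.
  intros HN [Hadj_in [Hadj_sym Hadj_irr]] _ Hpos HRl Hgain.
  assert (HCt : forall i, (i < N)%nat -> 0 < Ct i) by (intros i Hi; apply (Hpos i Hi)).
  assert (HDg : forall i, 0 <= Dg N adj Rl i).
  { intros i. unfold Dg. apply sumR_nonneg. intros j Hj. destruct (adj i j) eqn:E; [|lra].
    destruct (HRl i j E). left. apply Rdiv_lt_0_compat; lra. }
  set (Pl := fun i (e f : R) => 0<e /\ 0<f /\
  (exists m, 0<m /\ forall V I p J q,
      m*(V^2+I^2+p^2+J^2+q^2) <= Wl (Ct i) (LCt i) (kC1 i) (kC3 i) (LVt i) (RVt i) (kV1 i) (kV2 i) (kV3 i) e f V I p J q) /\
  (exists M, 0<M /\ forall V I p J q,
      Wl (Ct i) (LCt i) (kC1 i) (kC3 i) (LVt i) (RVt i) (kV1 i) (kV2 i) (kV3 i) e f V I p J q <= M*(V^2+I^2+p^2+J^2+q^2)) /\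
  (exists eta, 0<eta /\ forall V I p J q,
      Eloc (Ct i) (LCt i) (RCt i) (LVt i) (RVt i) (RL i) (kC1 i) (kC2 i) (kC3 i) (kV1 i) (kV2 i) (kV3 i) e f V I p J q
        + f*f*Dg N adj Rl i*(q*q) <= - eta*(V^2+I^2+p^2+J^2+q^2))).
  assert (Hex : forall i, exists ef : R*R, (i < N)%nat -> Pl i (fst ef) (snd ef)).
  { intros i. destruct (Nat.lt_ge_cases i N) as [Hi|Hi].
    - destruct (Hpos i Hi) as [H1 [H2 [H3 [H4 [H5 H6]]]]].
      destruct (Hgain i Hi) as [G1 [G2 [G3 [G4 [G5 [G6 G7]]]]]].
      destruct (local_lemma (Ct i) (LCt i) (RCt i) (LVt i) (RVt i) (RL i) (kC1 i) (kC2 i) (kC3 i) (kV1 i) (kV2 i) (kV3 i)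
                 (Dg N adj Rl i) H1 H2 H3 H4 H5 H6 (HDg i) G1 G2 G3 G4 G5 G6 G7) as [e [f Hef]].
      exists (e, f). intros _. exact Hef.
    - exists (0,0). intros; lia. }
  set (ef := fun i => proj1_sig (constructive_indefinite_description _ (Hex i))).
  assert (Hef : forall i, (i < N)%nat -> Pl i (fst (ef i)) (snd (ef i))).
  { intros i Hi. exact (proj2_sig (constructive_indefinite_description _ (Hex i)) Hi). }
  clearbody ef. set (e := fun i => fst (ef i)). set (f := fun i => snd (ef i)).
  assert (Hef' : forall i, (i < N)%nat -> Pl i (e i) (f i)) by exact Hef.
  clearbody e f. clear Hef Hex. unfold Pl in Hef'. clear Pl.
  destruct (unif_min N (fun i r => forall y, r * sq5 y i <= Wi Ct LCt LVt RVt kC1 kC3 kV1 kV2 kV3 e f y i)) as [m [Hm Hml]].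
  { intros i r r' H [Hr' Hle] y. specialize (H y). unfold sq5 in *.
    assert (0 <= y (5*i+0)%nat ^2 + y (5*i+1)%nat ^2 + y (5*i+2)%nat ^2 + y (5*i+3)%nat ^2 + y (5*i+4)%nat ^2) by
      (assert (T1 := pow2_ge_0 (y (5*i+0)%nat)); assert (T2 := pow2_ge_0 (y (5*i+1)%nat)); assert (T3 := pow2_ge_0 (y (5*i+2)%nat));
       assert (T4 := pow2_ge_0 (y (5*i+3)%nat)); assert (T5 := pow2_ge_0 (y (5*i+4)%nat)); lra).
    nra. }
  { intros i Hi. destruct (Hef' i Hi) as [_ [_ [[r [Hr Hb]] _]]]. exists r. split; [exact Hr|]. intros y. apply Hb. }
  destruct (unif_max N (fun i r => forall y, Wi Ct LCt LVt RVt kC1 kC3 kV1 kV2 kV3 e f y i <= r * sq5 y i)) as [M [HM HMl]].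
  { intros i r r' H Hle y. specialize (H y). unfold sq5 in *.
    assert (0 <= y (5*i+0)%nat ^2 + y (5*i+1)%nat ^2 + y (5*i+2)%nat ^2 + y (5*i+3)%nat ^2 + y (5*i+4)%nat ^2) by
      (assert (T1 := pow2_ge_0 (y (5*i+0)%nat)); assert (T2 := pow2_ge_0 (y (5*i+1)%nat)); assert (T3 := pow2_ge_0 (y (5*i+2)%nat));
       assert (T4 := pow2_ge_0 (y (5*i+3)%nat)); assert (T5 := pow2_ge_0 (y (5*i+4)%nat)); lra).
    nra. }
  { intros i Hi. destruct (Hef' i Hi) as [_ [_ [_ [[r [Hr Hb]] _]]]]. exists r. split; [exact Hr|]. intros y. apply Hb. }
  destruct (unif_min N (fun i r => forall y, Ei Ct LCt RCt LVt RVt RL kC1 kC2 kC3 kV1 kV2 kV3 e f y i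
          + f i * f i * Dg N adj Rl i * (y (5*i+4)%nat * y (5*i+4)%nat) <= - r * sq5 y i)) as [eta [Heta Hetal]].
  { intros i r r' H [Hr' Hle] y. specialize (H y). unfold sq5 in *.
    assert (0 <= y (5*i+0)%nat ^2 + y (5*i+1)%nat ^2 + y (5*i+2)%nat ^2 + y (5*i+3)%nat ^2 + y (5*i+4)%nat ^2) by
      (assert (T1 := pow2_ge_0 (y (5*i+0)%nat)); assert (T2 := pow2_ge_0 (y (5*i+1)%nat)); assert (T3 := pow2_ge_0 (y (5*i+2)%nat));
       assert (T4 := pow2_ge_0 (y (5*i+3)%nat)); assert (T5 := pow2_ge_0 (y (5*i+4)%nat)); lra).
    nra. }
  { intros i Hi. destruct (Hef' i Hi) as [_ [_ [_ [_ [r [Hr Hb]]]]]]. exists r. split; [exact Hr|]. intros y.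
    unfold Ei, sq5. apply Hb. }
  set (WG := Wg N Ct LCt LVt RVt kC1 kC3 kV1 kV2 kV3 e f).
  set (DD := fun y => sumR N (Di N adj Rl Ct LCt RCt LVt RVt RL kC1 kC2 kC3 kV1 kV2 kV3 e f y)).
  assert (HWb : forall y, m * Sq N y <= WG y /\ WG y <= M * Sq N y).
  { intros y. unfold WG, Wg. rewrite Sq_eq. split.
    - rewrite <- sumR_scal. apply sumR_le. intros i Hi. apply Hml; exact Hi.
    - rewrite <- sumR_scal. apply sumR_le. intros i Hi. apply HMl; exact Hi. }
  assert (HSq : forall y, 0 <= Sq N y) by (intros; unfold Sq; apply sumR_nonneg; intros; apply pow2_ge_0).
  assert (HDb : forall y, DD y <= - eta * Sq N y).
  { intros y. unfold DD. apply D_bound; auto. }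
  assert (Key : forall x, is_solution (5*N) (Fmat N adj Rl Ct LCt RCt LVt RVt RL kC1 kC2 kC3 kV1 kV2 kV3) x ->
     forall t, 0 <= t -> m * Sq N (x t) * (1 + eta/M * t) <= M * Sq N (x 0)).
  { intros x Hx. apply (abstract_decay (fun s => WG (x s)) (fun s => Sq N (x s)) (fun s => DD (x s)) m M eta Hm HM Heta).
    - intros t. unfold WG, DD. apply W_deriv. exact Hx.
    - intros t. apply HWb.
    - intros t. apply HDb.
    - intros t. apply HSq. }
  clearbody WG DD.
  assert (Hv : forall y, vnorm (5*N) y = sqrt (Sq N y)) by reflexivity.
  split.
  - intros eps Heps. exists (eps*m/(m+M)). split; [apply Rdiv_lt_0_compat; nra|].
    intros x Hx H0 t Ht. rewrite Hv in *.
    assert (K := Key x Hx t Ht).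
    remember (eps*m/(m+M)) as d eqn:ed.
    assert (Hd0 : 0 < d) by (rewrite ed; apply Rdiv_lt_0_compat; nra).
    assert (HS0 := sqrt_lt_sq _ _ (HSq (x 0)) H0).
    assert (Hq : m*M/((m+M)*(m+M)) <= 1).
    { unfold Rdiv. apply Rmult_le_reg_r with ((m+M)*(m+M)); [nra|]. rewrite Rmult_assoc, Rinv_l by nra. nra. }
    assert (HMd : M*(d*d) = m*(eps*eps)*(m*M/((m+M)*(m+M)))) by (rewrite ed; field; lra).
    assert (HMd2 : M*(d*d) <= m*(eps*eps)).
    { rewrite HMd. assert (0 < m*(eps*eps)) by (apply Rmult_lt_0_compat; nra).
      assert (0 <= m*M/((m+M)*(m+M))) by (apply Rle_mult_inv_pos; nra). nra. }
    assert (HMS : M * Sq N (x 0) < M*(d*d)) by (apply Rmult_lt_compat_l; lra).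
    assert (Hct : 0 <= eta/M*t) by (apply Rmult_le_pos; [left; apply Rdiv_lt_0_compat; lra|lra]).
    assert (HSt := HSq (x t)).
    assert (0 <= m * Sq N (x t) * (eta/M*t)) by (apply Rmult_le_pos; [apply Rmult_le_pos; lra| lra]).
    apply sq_lt_sqrt; [apply HSq| exact Heps|]. nra.
  - exists 1. split; [lra|]. intros x Hx H0 eps Heps. rewrite Hv in H0.
    assert (HS0 := sqrt_lt_sq _ _ (HSq (x 0)) H0).
    remember (eta/M) as c eqn:ec. assert (Hc : 0 < c) by (rewrite ec; apply Rdiv_lt_0_compat; lra).
    exists (M/(m*c*(eps*eps))). intros t Ht. rewrite Hv.
    assert (HT : 0 < M/(m*c*(eps*eps))) by (apply Rdiv_lt_0_compat; [lra| repeat apply Rmult_lt_0_compat; lra]).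
    assert (Ht0 : 0 <= t) by lra. assert (K := Key x Hx t Ht0).
    assert (Hct : m*(eps*eps)*c*t >= M).
    { assert (m*(eps*eps)*c*(M/(m*c*(eps*eps))) = M) by (field; repeat split; lra).
      assert (0 < m*(eps*eps)*c) by (repeat apply Rmult_lt_0_compat; lra).
      assert (m*(eps*eps)*c*(M/(m*c*(eps*eps))) <= m*(eps*eps)*c*t) by (apply Rmult_le_compat_l; lra). lra. }
    assert (HSt := HSq (x t)).
    apply sq_lt_sqrt; [apply HSq| exact Heps|].
    destruct (Rlt_or_le (Sq N (x t)) (eps*eps)) as [Hlt|Hge]; [exact Hlt|exfalso].
    assert (0 <= c*t) by (apply Rmult_le_pos; lra).
    assert (m*(eps*eps)*(1+c*t) <= m * Sq N (x t) * (1 + c*t)).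
    { apply Rmult_le_compat_r; [lra|]. apply Rmult_le_compat_l; lra. }
    assert (M * Sq N (x 0) < M * 1) by (apply Rmult_lt_compat_l; lra).
    nra.
Qed.
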